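(* Let $R$ be a finite ring with identity, $\alpha\in(0,1)$, and let $\pi_U$ be the stationary distribution of the Markov chain $(X^U_t)$ on $R$ defined below. Let $n=|R|$ and $m=|U_R|$. Then for every unit $u\in U_R$, \[\pi_U(u)=\frac{\alpha}{n-m+m\alpha}.\]
   Context: $U_R$ is the group of units of $R$. The chain $(X^U_t)$: at each step an independent coin with Heads probability $\alpha$ is tossed; on Heads, $X_{t+1}=X_t+Y$ with $Y$ uniform on $R$; on Tails, $X_{t+1}=Z\cdot X_t$ with $Z$ uniform on $R$ (all independent). *)

(* Defs.v *)
From HB Require Import structures.
From mathcomp Require Import all_boot all_order all_algebra.
Set Implicit Arguments. Unset Strict Implicit. Unset Printing Implicit Defensive.
Import Order.TTheory GRing.Theory Num.Theory.
Local Open Scope ring_scope.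

(* The chain X^U on a finite ring A (with identity, carrying its canonical
   unit structure): with probability alpha, X_{t+1} = X_t + Y (Y uniform on A);
   with probability 1 - alpha, X_{t+1} = Z * X_t (Z uniform on A). *)
Definition transU (A : finUnitRingType) (K : realFieldType) (alpha : K)
  (x y : A) : K :=
  alpha * (#|[pred w : A | x + w == y]|%:R / #|A|%:R)
  + (1 - alpha) * (#|[pred z : A | z * x == y]|%:R / #|A|%:R).

Definition stationaryU (A : finUnitRingType) (K : realFieldType) (alpha : K)
  (pi : A -> K) : Prop :=
  (forall x, 0 <= pi x) /\ (\sum_(x : A) pi x = 1) /\
  (forall y : A, \sum_(x : A) pi x * transU alpha x y = pi y).

(* Main.v *)
Require Import Defs.
From HB Require Import structures.
From mathcomp Require Import all_boot all_order all_algebra.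
From mathcomp Require Import ring.
Import Order.TTheory GRing.Theory Num.Theory.
Local Open Scope ring_scope.

Lemma left_inv_unit (A : finUnitRingType) (l x : A) : l * x = 1 -> x \is a GRing.unit.
Proof.
move=> lx.
have inj : injective (fun r : A => x * r).
  by move=> r1 r2 /= h; rewrite -[r1]mul1r -[r2]mul1r -lx -!mulrA h.
have [g fg gf] := injF_bij inj.
have xr : x * g 1 = 1 by rewrite gf.
have e : l = g 1 by rewrite -[l]mulr1 -xr mulrA lx mul1r.
by apply/unitrP; exists l; split => //; rewrite e.
Qed.

Lemma card_add (A : finUnitRingType) (x y : A) : #|[pred w : A | x + w == y]| = 1%N.
Proof.
apply: (@eq_card1 _ (y - x)) => w; rewrite !inE.
apply/eqP/eqP => [<-|->]; first by rewrite addrC addKr.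
by rewrite addrC subrK.
Qed.

Lemma card_mul (A : finUnitRingType) (x y : A) : y \is a GRing.unit ->
  #|[pred z : A | z * x == y]| = (x \is a GRing.unit : nat).
Proof.
move=> yu; case: (boolP (x \is a GRing.unit)) => xu /=.
  apply: (@eq_card1 _ (y / x)) => z; rewrite !inE.
  apply/eqP/eqP => [<-|->]; first by rewrite mulrK.
  by rewrite divrK.
apply: eq_card0 => z; rewrite !inE; apply/negP => /eqP zx.
apply/negP: xu; rewrite negbK; apply: (@left_inv_unit _ (y^-1 * z)).
by rewrite -mulrA zx mulVr.
Qed.

Theorem corollary3p4 (A : finUnitRingType) (K : realFieldType) (alpha : K)
  (halpha : 0 < alpha < 1) (pi : A -> K) (hpi : stationaryU alpha pi)
  (u : A) (hu : u \is a GRing.unit) :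
  pi u = alpha / (#|A|%:R - #|[pred v : A | v \is a GRing.unit]|%:R
                  + #|[pred v : A | v \is a GRing.unit]|%:R * alpha).
Proof.
case: hpi => [pos [sum1 st]].
case/andP: halpha => a0 a1.
set n := #|A|. set m := #|[pred v : A | v \is a GRing.unit]|.
set S := \sum_(x | x \is a GRing.unit) pi x.
set c := alpha / n%:R + (1 - alpha) / n%:R * S.
have hc : forall y, y \is a GRing.unit -> pi y = c.
  move=> y yu; rewrite -st /transU.
  rewrite (eq_bigr (fun x => alpha / n%:R * pi x + (1 - alpha) / n%:R *
      (pi x * (x \is a GRing.unit : nat)%:R))); last first.
    by move=> x _; rewrite card_add card_mul //; ring.
  rewrite big_split /= -!mulr_sumr sum1 mulr1 /c /S; congr (_ + _ * _).
  rewrite [RHS]big_mkcond /=; apply: eq_bigr => x _.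
  by case: (x \is a GRing.unit); rewrite /= ?mulr1 ?mulr0.
have hS : S = m%:R * c.
  rewrite /S (eq_bigr (fun _ => c)); last by move=> x xu; rewrite hc.
  rewrite sumr_const mulr_natl; congr (_ *+ _); exact: eq_card.
have n0 : (0 < n)%N by apply/card_gt0P; exists 0.
have mn : (m <= n)%N by apply: max_card.
have m0 : (0 < m)%N by apply/card_gt0P; exists 1; rewrite inE unitr1.
have nR : n%:R != 0 :> K by rewrite pnatr_eq0 -lt0n.
have D0 : n%:R - m%:R + m%:R * alpha != 0 :> K.
  rewrite lt0r_neq0 // ltr_wpDl //; first by rewrite subr_ge0 ler_nat.
  by rewrite mulr_gt0 // ltr0n.
rewrite hc //; apply: (mulIf D0); rewrite divfK //.
have : c * n%:R = alpha + (1 - alpha) * m%:R * c.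
  rewrite {1}/c hS; field; exact: nR.
move=> h; rewrite mulrDr mulrBr h; ring.
Qed.
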